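(* Let $(\mathbf a,b)\in\mathbb{Z}^2\times\mathbb{N}$ with $\gcd(\mathbf a,b)=1$ (i.e. $\gcd(a_1,a_2,b)=1$), and let $\boldsymbol\beta\in\mathbb{R}^2$. Then there is an absolute constant $C>0$ such that for all $0<\varepsilon<1$, $$\sum_{0\le h\le b-1}\mathbb 1\left[\left\|h\tfrac{\mathbf a}{b}+\boldsymbol\beta\right\|<\varepsilon\right]\le C(\varepsilon b+1),$$ and for all $N\ge1$ (and $0<\varepsilon<1$), $$\sum_{1\le h\le N}\mathbb 1\left[\left\|h\tfrac{\mathbf a}{b}\right\|<\varepsilon\right]\le C\left((\varepsilon b+1)\frac{N}{b}\mathbb 1[N\ge b]+\min\{N,\varepsilon b\}\mathbb 1[N<b]\right).$$
   Context: $\|\mathbf x\|$ denotes the distance from $\mathbf x\in\mathbb{R}^2$ to the nearest point of $\mathbb{Z}^2$ with respect to the maximum norm; $\mathbb 1[\cdot]$ is the indicator of a condition. *)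

(* Defs.v *)
From Stdlib Require Import Reals Lra Lia ZArith List.
Open Scope R_scope.

Definition dist_Z (t : R) : R :=
  Rmin (t - IZR (Int_part t)) (IZR (Int_part t) + 1 - t).

(* ||x|| for x = (x1,x2) in R^2 : distance to the nearest point of Z^2 w.r.t.
   the maximum norm; this is the max of the coordinatewise distances. *)
Definition torus_norm (x1 x2 : R) : R := Rmax (dist_Z x1) (dist_Z x2).

Definition ind_lt (u v : R) : R := if Rlt_dec u v then 1 else 0.

Definition sumR (l : list nat) (f : nat -> R) : R :=
  fold_right Rplus 0 (map f l).

(* Main.v *)
Require Import Defs.
From Stdlib Require Import Reals ZArith List Lia Lra Znumtheory.
Open Scope R_scope.

Definition jsel (eps x : R) : Z :=
  if Rlt_dec (x - IZR (Int_part x)) eps then Int_part x else (Int_part x + 1)%Z.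

Lemma jsel_spec eps x : dist_Z x < eps ->
  x - IZR (jsel eps x) < eps /\ - eps < x - IZR (jsel eps x).
Proof.
  unfold dist_Z, jsel; intros H. destruct (base_Int_part x) as [H1 H2].
  destruct (Rlt_dec (x - IZR (Int_part x)) eps) as [h|h].
  - unfold Rmin in H; destruct Rle_dec; lra.
  - rewrite plus_IZR. unfold Rmin in H; destruct Rle_dec; lra.
Qed.

Lemma div_lt1 x y d : 0 < d -> x < y * d -> x / d < y.
Proof. intros Hd H. apply Rmult_lt_reg_r with d; auto.
  unfold Rdiv; rewrite Rmult_assoc, Rinv_l; lra. Qed.
Lemma div_lt2 x y d : 0 < d -> y * d < x -> y < x / d.
Proof. intros Hd H. apply Rmult_lt_reg_r with d; auto.
  unfold Rdiv; rewrite Rmult_assoc, Rinv_l; lra. Qed.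

Definition zr (lo hi : R) : list Z :=
  map (fun k => (up lo + Z.of_nat k)%Z) (seq 0 (Z.to_nat (up hi - up lo))).

Lemma zr_in lo hi t : lo < IZR t -> IZR t < hi -> In t (zr lo hi).
Proof.
  intros H1 H2. destruct (archimed lo) as [A1 A2]. destruct (archimed hi) as [B1 B2].
  assert (t > up lo - 1)%Z. { apply Z.lt_gt, lt_IZR. rewrite minus_IZR. simpl; lra. }
  assert (t < up hi)%Z. { apply lt_IZR. lra. }
  unfold zr. apply in_map_iff. exists (Z.to_nat (t - up lo)). split. lia.
  apply in_seq. lia.
Qed.

Lemma zr_len lo hi : lo <= hi -> INR (length (zr lo hi)) <= hi - lo + 1.
Proof.
  intros H. unfold zr. rewrite length_map, length_seq.
  destruct (archimed lo) as [A1 A2]. destruct (archimed hi) as [B1 B2].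
  destruct (Z_lt_le_dec 0 (up hi - up lo)).
  - rewrite INR_IZR_INZ, Z2Nat.id by lia. rewrite minus_IZR. lra.
  - replace (Z.to_nat (up hi - up lo)) with 0%nat by lia. simpl; lra.
Qed.

Lemma sumR_count (l : list nat) (g : nat -> R) eps :
  sumR l (fun h => ind_lt (g h) eps) =
  INR (length (filter (fun h => if Rlt_dec (g h) eps then true else false) l)).
Proof.
  induction l as [|x l IH]; simpl. reflexivity.
  unfold sumR in *; simpl. rewrite IH. unfold ind_lt.
  destruct (Rlt_dec (g x) eps); simpl length; [rewrite S_INR|]; lra.
Qed.

Lemma div_two (a1 a2 b x : Z) : Z.gcd (Z.gcd a1 a2) b = 1%Z ->
  (b | x * a1)%Z -> (b | x * a2)%Z -> (b | x)%Z.
Proof.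
  intros G H1 H2. destruct (Z.gcd_bezout a1 a2 _ eq_refl) as [u [v Huv]].
  apply Z.gauss with (Z.gcd a1 a2).
  - rewrite <- Huv. replace ((u * a1 + v * a2) * x)%Z with (u * (x * a1) + v * (x * a2))%Z by ring.
    apply Z.divide_add_r; apply Z.divide_mul_r; auto.
  - rewrite Z.gcd_comm; auto.
Qed.

Lemma div_one (a1 b x n d : Z) : d = Z.gcd a1 b -> b = (n * d)%Z -> (0 < b)%Z ->
  (b | x * a1)%Z -> (n | x)%Z.
Proof.
  intros Hd Hb Hb0 H. destruct (Z.gcd_divide_l a1 b) as [a' Ha'].
  rewrite <- Hd in Ha'.
  assert (Dnz : d <> 0%Z). { intro. subst b. lia. }
  assert (Dpos : (0 <= d)%Z) by (rewrite Hd; apply Z.gcd_nonneg).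
  assert (Z.gcd a' n = 1%Z).
  { assert (E: Z.gcd (a' * d) (n * d) = d) by (rewrite <- Ha', <- Hb; auto).
    rewrite Z.gcd_mul_mono_r, Z.abs_eq in E by lia.
    apply Z.mul_id_l in E; auto. }
  apply Z.gauss with a'.
  - apply (Z.mul_divide_cancel_r _ _ d Dnz). rewrite <- Hb.
    replace (a' * x * d)%Z with (x * (a' * d))%Z by ring. rewrite <- Ha'. auto.
  - rewrite Z.gcd_comm; auto.
Qed.

Definition vf (eps : R) (a : Z) (b : nat) (beta : R) (h : nat) : Z :=
  (Z.of_nat h * a - jsel eps (INR h * IZR a / INR b + beta) * Z.of_nat b)%Z.

Lemma v_bound eps a b beta h : (0 < b)%nat ->
  dist_Z (INR h * IZR a / INR b + beta) < eps ->
  -(eps * INR b) < IZR (vf eps a b beta h) + INR b * beta < eps * INR b.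
Proof.
  intros Hb H. apply jsel_spec in H.
  set (j := jsel eps (INR h * IZR a / INR b + beta)) in *.
  assert (Bp : 0 < INR b) by (apply lt_0_INR; lia).
  assert (E : IZR (vf eps a b beta h) + INR b * beta =
     INR b * (INR h * IZR a / INR b + beta - IZR j)).
  { unfold vf. fold j. rewrite minus_IZR, !mult_IZR, <- !INR_IZR_INZ. field. lra. }
  rewrite E. split; nra.
Qed.

Lemma mod_eq_of_div (n x y : Z) : (n | x - y)%Z -> (x mod n = y mod n)%Z.
Proof. intros [k Hk]. replace x with (y + k * n)%Z by lia. apply Z_mod_plus_full. Qed.

Lemma core a1 a2 b beta1 beta2 eps c l (x1 x2 : nat -> R) :
  (0 < b)%nat -> Z.gcd (Z.gcd a1 a2) (Z.of_nat b) = 1%Z -> 0 < eps < 1 -> NoDup l ->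
  (forall h, In h l -> c <= h < c + b)%nat ->
  (forall h, x1 h = INR h * IZR a1 / INR b + beta1) ->
  (forall h, x2 h = INR h * IZR a2 / INR b + beta2) ->
  INR (length (filter (fun h => if Rlt_dec (torus_norm (x1 h) (x2 h)) eps then true else false) l))
   <= 10 * eps * INR b + 2.
Proof.
  intros Hb G He Hnd Hr Hx1 Hx2.
  set (B := Z.of_nat b).
  assert (B0 : (0 < B)%Z) by (unfold B; lia).
  set (d := Z.gcd a1 B).
  destruct (Z.gcd_divide_r a1 B) as [n Hn]. fold d in Hn.
  assert (d0 : (0 <= d)%Z) by apply Z.gcd_nonneg.
  assert (dpos : (0 < d)%Z) by (destruct (Z.eq_dec d 0); [rewrite e in Hn; lia | lia]).
  assert (npos : (0 < n)%Z) by nia.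
  assert (dle : (d <= B)%Z) by nia.
  assert (nle : (n <= B)%Z) by nia.
  set (P := fun h => if Rlt_dec (torus_norm (x1 h) (x2 h)) eps then true else false).
  set (F := filter P l).
  set (v1 := vf eps a1 b beta1). set (v2 := vf eps a2 b beta2).
  set (f := fun h => ((v1 h / d)%Z, (v2 h / n)%Z)).
  assert (Dv1 : forall h, (d | v1 h)%Z).
  { intro h. unfold v1, vf. fold B. apply Z.divide_sub_r.
    apply Z.divide_mul_r, Z.gcd_divide_l. apply Z.divide_mul_r, Z.gcd_divide_r. }
  assert (Ev1 : forall h, v1 h = (d * (v1 h / d))%Z).
  { intro h. destruct (Dv1 h) as [k Hk]. rewrite Hk, Z.div_mul by lia. ring. }
  assert (Inj : forall h h', In h l -> In h' l -> f h = f h' -> h = h').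
  { intros h h' Hh Hh' Hf. unfold f in Hf. injection Hf as E1 E2.
    assert (V1 : v1 h = v1 h') by (rewrite (Ev1 h), (Ev1 h'), E1; reflexivity).
    set (H := (Z.of_nat h - Z.of_nat h')%Z).
    assert (Da1 : (B | H * a1)%Z).
    { exists (jsel eps (INR h * IZR a1 / INR b + beta1) - jsel eps (INR h' * IZR a1 / INR b + beta1))%Z.
      unfold v1, vf in V1. fold B in V1. unfold H. lia. }
    assert (Dn : (n | H)%Z) by (apply (div_one a1 B H n d); auto).
    assert (Dv2 : (n | v2 h - v2 h')%Z).
    { unfold v2, vf. fold B. destruct Dn as [k Hk].
      exists (k * a2 - (jsel eps (INR h * IZR a2 / INR b + beta2) - jsel eps (INR h' * IZR a2 / INR b + beta2)) * d)%Z.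
      rewrite Hn. unfold H in Hk. nia. }
    apply mod_eq_of_div in Dv2.
    assert (V2 : v2 h = v2 h').
    { rewrite (Z.div_mod (v2 h) n), (Z.div_mod (v2 h') n) by lia. rewrite E2, Dv2. reflexivity. }
    assert (Da2 : (B | H * a2)%Z).
    { exists (jsel eps (INR h * IZR a2 / INR b + beta2) - jsel eps (INR h' * IZR a2 / INR b + beta2))%Z.
      unfold v2, vf in V2. fold B in V2. unfold H. lia. }
    assert (DH : (B | H)%Z) by (apply (div_two a1 a2); auto).
    destruct DH as [k Hk]. apply Hr in Hh. apply Hr in Hh'. unfold H, B in Hk. assert (k = 0%Z) by nia. subst k. lia. }
  assert (Bp : 0 < INR b) by (apply lt_0_INR; lia).
  assert (EB : INR b = IZR n * IZR d).
  { rewrite INR_IZR_INZ. fold B. rewrite Hn, mult_IZR. reflexivity. }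
  assert (Dp : 1 <= IZR d) by (apply IZR_le; lia).
  assert (Np : 1 <= IZR n) by (apply IZR_le; lia).
  set (TL := zr ((-(INR b * beta1) - eps * INR b) / IZR d) ((-(INR b * beta1) + eps * INR b) / IZR d)).
  set (SL := zr ((-(INR b * beta2) - eps * INR b - IZR n) / IZR n) ((-(INR b * beta2) + eps * INR b) / IZR n)).
  assert (Incl : incl (map f F) (list_prod TL SL)).
  { intros p Hp. apply in_map_iff in Hp. destruct Hp as [h [<- Hh]].
    unfold F in Hh. apply filter_In in Hh. destruct Hh as [_ Ph].
    unfold P in Ph. destruct Rlt_dec as [T|]; [|discriminate].
    apply Rmax_Rlt in T. destruct T as [T1 T2]. rewrite Hx1 in T1. rewrite Hx2 in T2.
    apply v_bound in T1; auto. apply v_bound in T2; auto. fold v1 v2 in T1, T2.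
    unfold f. apply in_prod.
    - apply zr_in.
      + apply div_lt1. lra. rewrite Ev1, mult_IZR in T1. lra.
      + apply div_lt2. lra. rewrite Ev1, mult_IZR in T1. lra.
    - assert (M := Z.mod_pos_bound (v2 h) n npos).
      assert (R0 : 0 <= IZR (v2 h mod n)) by (apply IZR_le; lia).
      assert (R1 : IZR (v2 h mod n) < IZR n) by (apply IZR_lt; lia).
      assert (DM : IZR (v2 h) = IZR n * IZR (v2 h / n) + IZR (v2 h mod n)).
      { rewrite <- mult_IZR, <- plus_IZR. f_equal. apply Z.div_mod. lia. }
      apply zr_in.
      + apply div_lt1. lra. lra.
      + apply div_lt2. lra. lra. }
  assert (NDm : NoDup (map f F)).
  { apply NoDup_map_NoDup_ForallPairs.
    - intros h h' Hh Hh'. unfold F in Hh, Hh'. apply filter_In in Hh, Hh'. apply Inj; tauto.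
    - apply NoDup_filter; auto. }
  assert (Len := NoDup_incl_length NDm Incl).
  rewrite length_map, length_prod in Len. apply le_INR in Len. rewrite mult_INR in Len.
  set (e := eps * INR b) in *.
  assert (e0 : 0 <= e) by (unfold e; nra).
  assert (LT : INR (length TL) <= 2 * (e / IZR d) + 1).
  { unfold TL. eapply Rle_trans. apply zr_len.
    unfold Rdiv. apply Rmult_le_compat_r. left; apply Rinv_0_lt_compat; lra. lra.
    right. field. lra. }
  assert (LS : INR (length SL) <= 2 * (e / IZR n) + 2).
  { unfold SL. eapply Rle_trans. apply zr_len.
    unfold Rdiv. apply Rmult_le_compat_r. left; apply Rinv_0_lt_compat; lra. lra.
    right. field. lra. }
  assert (pq : (e / IZR d) * (e / IZR n) = eps * e).
  { unfold e. rewrite EB. field. lra. }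
  assert (p1 : e / IZR d <= e).
  { assert (I1 : / IZR d <= 1) by (rewrite <- Rinv_1; apply Rinv_le_contravar; lra).
    assert (I0 : 0 < / IZR d) by (apply Rinv_0_lt_compat; lra).
    unfold Rdiv; nra. }
  assert (q1 : e / IZR n <= e).
  { assert (I1 : / IZR n <= 1) by (rewrite <- Rinv_1; apply Rinv_le_contravar; lra).
    assert (I0 : 0 < / IZR n) by (apply Rinv_0_lt_compat; lra).
    unfold Rdiv; nra. }
  assert (p0 : 0 <= e / IZR d) by (unfold Rdiv; apply Rmult_le_pos; [lra| left; apply Rinv_0_lt_compat; lra]).
  assert (q0 : 0 <= e / IZR n) by (unfold Rdiv; apply Rmult_le_pos; [lra| left; apply Rinv_0_lt_compat; lra]).
  fold F. eapply Rle_trans. apply Len.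
  eapply Rle_trans. apply Rmult_le_compat; try apply pos_INR; eauto.
  replace (10 * eps * INR b) with (10 * e) by (unfold e; ring). assert (eps * e <= e) by nra. set (p := e / IZR d) in *. set (q := e / IZR n) in *. nra.
Qed.

Lemma blocks a1 a2 b eps (x1 x2 : nat -> R) :
  (0 < b)%nat -> Z.gcd (Z.gcd a1 a2) (Z.of_nat b) = 1%Z -> 0 < eps < 1 ->
  (forall h, x1 h = INR h * IZR a1 / INR b + 0) ->
  (forall h, x2 h = INR h * IZR a2 / INR b + 0) ->
  forall L c,
  INR (length (filter (fun h => if Rlt_dec (torus_norm (x1 h) (x2 h)) eps then true else false) (seq c L)))
   <= (INR L / INR b + 1) * (10 * eps * INR b + 2).
Proof.
  intros Hb G He H1 H2.
  assert (Bp : 0 < INR b) by (apply lt_0_INR; lia).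
  assert (K0 : 0 <= 10 * eps * INR b + 2) by nra.
  assert (Lb0 : forall L, 0 <= INR L / INR b)
    by (intro; unfold Rdiv; apply Rmult_le_pos; [apply pos_INR| left; apply Rinv_0_lt_compat; lra]).
  intros L. induction L as [L IH] using (well_founded_induction lt_wf). intros c.
  destruct (le_lt_dec L b) as [Hl|Hl].
  - eapply Rle_trans. eapply (core a1 a2 b 0 0 eps c); eauto.
    apply seq_NoDup. intros h Hh. apply in_seq in Hh. lia.
    specialize (Lb0 L). nra.
  - replace L with (b + (L - b))%nat by lia. rewrite seq_app, filter_app, length_app, plus_INR.
    assert (A := core a1 a2 b 0 0 eps c (seq c b) x1 x2 Hb G He (seq_NoDup _ _)).
    assert (A' : INR (length (filter (fun h => if Rlt_dec (torus_norm (x1 h) (x2 h)) eps then true else false) (seq c b))) <= 10 * eps * INR b + 2).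
    { apply A; auto. intros h Hh. apply in_seq in Hh. lia. }
    assert (B := IH (L - b)%nat ltac:(lia) (c + b)%nat).
    replace (INR (b + (L - b)) / INR b + 1) with (1 + (INR (L - b) / INR b + 1)).
    nra. rewrite plus_INR. field. lra.
Qed.

Lemma zero_case a1 a2 b eps h : (0 < b)%nat -> Z.gcd (Z.gcd a1 a2) (Z.of_nat b) = 1%Z ->
  (1 <= h < b)%nat -> eps * INR b <= 1 ->
  torus_norm (INR h * IZR a1 / INR b) (INR h * IZR a2 / INR b) < eps -> False.
Proof.
  intros Hb G Hh He T. apply Rmax_Rlt in T. destruct T as [T1 T2].
  rewrite <- (Rplus_0_r (_ / INR b)) in T1. rewrite <- (Rplus_0_r (_ / INR b)) in T2.
  apply v_bound in T1; auto. apply v_bound in T2; auto.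
  rewrite Rmult_0_r, Rplus_0_r in T1, T2.
  assert (Z1 : vf eps a1 b 0 h = 0%Z).
  { assert (-1 < vf eps a1 b 0 h < 1)%Z by (split; apply lt_IZR; simpl; lra). lia. }
  assert (Z2 : vf eps a2 b 0 h = 0%Z).
  { assert (-1 < vf eps a2 b 0 h < 1)%Z by (split; apply lt_IZR; simpl; lra). lia. }
  unfold vf in Z1, Z2.
  assert (D : (Z.of_nat b | Z.of_nat h)%Z).
  { apply (div_two a1 a2); auto.
    - eexists. rewrite Z.sub_move_0_r in Z1. exact Z1.
    - eexists. rewrite Z.sub_move_0_r in Z2. exact Z2. }
  destruct D as [k Hk]. assert (k = 0%Z \/ k <> 0%Z) as [->|] by lia; nia.
Qed.

Lemma filter_nil_all {A} (f : A -> bool) l : (forall x, In x l -> f x = false) -> filter f l = nil.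
Proof. induction l; simpl; intros H; auto. rewrite H by auto. apply IHl; auto. Qed.

Theorem lemma4p2 :
  exists C : R, 0 < C /\
  forall (a1 a2 : Z) (b : nat) (beta1 beta2 : R),
    (0 < b)%nat ->
    Z.gcd (Z.gcd a1 a2) (Z.of_nat b) = 1%Z ->
    forall eps : R, 0 < eps < 1 ->
      sumR (seq 0 b)
        (fun h => ind_lt
           (torus_norm (INR h * IZR a1 / INR b + beta1)
                       (INR h * IZR a2 / INR b + beta2)) eps)
        <= C * (eps * INR b + 1)
      /\
      forall N : nat, (1 <= N)%nat ->
        sumR (seq 1 N)
          (fun h => ind_lt
             (torus_norm (INR h * IZR a1 / INR b) (INR h * IZR a2 / INR b)) eps)
          <= C * ((if Nat.leb b N then (eps * INR b + 1) * (INR N / INR b) else 0)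
                  + (if Nat.ltb N b then Rmin (INR N) (eps * INR b) else 0)).
Proof.
  exists 20. split. lra.
  intros a1 a2 b beta1 beta2 Hb G eps He.
  assert (Bp : 0 < INR b) by (apply lt_0_INR; lia).
  split.
  - rewrite (sumR_count _ (fun h => torus_norm (INR h * IZR a1 / INR b + beta1)
                       (INR h * IZR a2 / INR b + beta2))).
    eapply Rle_trans. eapply (core a1 a2 b beta1 beta2 eps 0); eauto.
    apply seq_NoDup. intros h Hh; apply in_seq in Hh; lia. nra.
  - intros N HN.
    rewrite (sumR_count _ (fun h => torus_norm (INR h * IZR a1 / INR b) (INR h * IZR a2 / INR b))).
    destruct (Nat.leb b N) eqn:E1.
    + apply Nat.leb_le in E1. replace (Nat.ltb N b) with false by (symmetry; apply Nat.ltb_ge; lia).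
      eapply Rle_trans. eapply (blocks a1 a2 b eps); eauto; intros; lra.
      assert (NB : 1 <= INR N / INR b).
      { apply le_INR in E1. unfold Rdiv. rewrite <- (Rinv_r (INR b)) by lra.
        apply Rmult_le_compat_r; [left; apply Rinv_0_lt_compat|]; lra. }
      set (r := INR N / INR b) in *. assert (0 <= eps * INR b) by nra. set (e := eps * INR b) in *. replace (10 * eps * INR b) with (10 * e) by (unfold e; ring). nra.
    + apply Nat.leb_gt in E1. replace (Nat.ltb N b) with true by (symmetry; apply Nat.ltb_lt; lia).
      rewrite Rplus_0_l.
      destruct (Rle_dec (eps * INR b) 1) as [Hs|Hs].
      * rewrite filter_nil_all. simpl length. assert (0 <= INR N) by apply pos_INR. assert (0 <= eps * INR b) by nra. unfold Rmin; destruct Rle_dec; simpl INR; nra.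
        intros h Hh. apply in_seq in Hh. destruct Rlt_dec as [T|]; auto.
        exfalso. apply (zero_case a1 a2 b eps h); auto. lia.
      * set (F := filter _ _).
        assert (C1 : INR (length F) <= INR N).
        { apply le_INR. eapply Nat.le_trans. apply filter_length_le. rewrite length_seq. lia. }
        assert (C2 : INR (length F) <= 10 * eps * INR b + 2).
        { eapply (core a1 a2 b 0 0 eps 1); eauto. apply seq_NoDup.
          intros h Hh; apply in_seq in Hh; lia. intros; ring. intros; ring. }
        assert (1 < eps * INR b) by lra. assert (0 <= INR N) by apply pos_INR. unfold Rmin; destruct Rle_dec; lra.
Qed.
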